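(* Let $m\ge 2$ and let $\mathcal{A}\subseteq\mathcal{P}([m])$ be a finite union-closed, separating collection of sets with universe $U(\mathcal{A})=[m]=\{1,\dots,m\}$, where the elements are labelled so that $|1|_{\mathcal{A}}\le |2|_{\mathcal{A}}\le\dots\le |m|_{\mathcal{A}}$. For $i\in[m-1]$ let $A_i:=\bigcup_{A\in\mathcal{A},\, i\notin A} A$, let $A_0:=U(\mathcal{A})$, and let $\mathcal{S}$ be the collection $\{A_0,A_1,\dots,A_{m-1}\}$. Then for every $i\in\{1,\dots,m-1\}$ with $|i|_{\mathcal{S}}<m-1$, there exists an element $k\in\{1,\dots,m-1\}$ with $|k|_{\mathcal{S}}=m-1$ that dominates $i$ in $\mathcal{A}$.
   Context: A collection $\mathcal{A}$ of sets is union-closed if $S,T\in\mathcal{A}$ implies $S\cup T\in\mathcal{A}$. The universe $U(\mathcal{A})$ is $\bigcup_{A\in\mathcal{A}}A$. $\mathcal{A}$ is separating if for any two distinct elements of $U(\mathcal{A})$ there is a set in $\mathcal{A}$ containing one of them but not the other. For an element $a$ and a collection $\mathcal{B}$, $|a|_{\mathcal{B}}$ denotes the number of sets in $\mathcal{B}$ containing $a$. An element $b$ dominates an element $c$ in $\mathcal{A}$ if every set of $\mathcal{A}$ that contains $c$ also contains $b$. (Under the hypotheses, for each $i\in[m-1]$ there is a set of $\mathcal{A}$ not containing $i$, and $A_i$ contains every $j>i$ but not $i$, so the sets $A_0,\dots,A_{m-1}$ are distinct.) *)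

(* Defs.v *)
From mathcomp Require Import all_boot all_order.
Set Implicit Arguments. Unset Strict Implicit. Unset Printing Implicit Defensive.

(* Ground type 'I_m.+1 = {0,...,m}; the label 0 is unused, so [m] = {1,...,m}
   is represented by the elements i with 0 < i. *)

Definition union_closed (T : finType) (A : {set {set T}}) : Prop :=
  forall S U, S \in A -> U \in A -> S :|: U \in A.

Definition universe (T : finType) (A : {set {set T}}) : {set T} :=
  \bigcup_(S in A) S.

Definition separating (T : finType) (A : {set {set T}}) : Prop :=
  forall x y, x \in universe A -> y \in universe A -> x != y ->
    exists2 S, S \in A & (x \in S) != (y \in S).

Definition deg (T : finType) (B : {set {set T}}) (a : T) : nat :=
  #|[set S in B | a \in S]|.

Definition dominates (T : finType) (A : {set {set T}}) (b c : T) : Prop :=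
  forall S, S \in A -> c \in S -> b \in S.

Definition Aset (T : finType) (A : {set {set T}}) (i : T) : {set T} :=
  \bigcup_(S in A | i \notin S) S.

Definition Scoll (m : nat) (A : {set {set 'I_m.+1}}) : {set {set 'I_m.+1}} :=
  universe A |: [set Aset A i | i : 'I_m.+1 in [pred i : 'I_m.+1 | (0 < i < m)%N]].

(* Main.v *)
Require Import Defs.
From mathcomp Require Import all_boot all_order zify.

Section H.
Variable T : finType.
Variable A : {set {set T}}.

Lemma mem_Aset i x : reflect (exists2 S, S \in A & (i \notin S) && (x \in S)) (x \in Aset A i).
Proof.
apply: (iffP bigcupP) => [[S /andP[SA iS] xS]|[S SA /andP[iS xS]]]; exists S => //.
  by rewrite iS xS.
by rewrite SA iS.
Qed.

Lemma notin_Aset i : i \notin Aset A i.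
Proof. by apply/mem_Aset => -[S _ /andP[/negP]]. Qed.

Lemma notAset_dom l k : k \notin Aset A l -> dominates A l k.
Proof.
move=> kn S SA kS; apply/negPn/negP => lS; move/negP: kn; apply.
by apply/mem_Aset; exists S => //; rewrite lS kS.
Qed.

Lemma sep_Aset i j : union_closed A -> separating A -> i \in universe A -> j \in universe A ->
  i != j -> (deg A i <= deg A j) -> j \in Aset A i.
Proof.
move=> _ sep iU jU ij dij; apply/negPn/negP => jn.
have dom := @notAset_dom i j jn.
have sub : [set S in A | j \in S] \subset [set S in A | i \in S].
  by apply/subsetP => S; rewrite !inE => /andP[SA jS]; rewrite SA (dom S SA jS).
have := subset_leqif_cards sub; rewrite /deg in dij => -[_ ].
have -> : (#|[set S in A | j \in S]| == #|[set S in A | i \in S]|) = true.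
  by rewrite eqn_leq dij (subset_leq_card sub).
move/esym/eqP => E.
have [S SA] := sep i j iU jU ij.
case iS: (i \in S); case jS: (j \in S) => //= _.
  have : S \in [set S in A | i \in S] by rewrite inE SA iS.
  by rewrite -E inE jS andbF.
by have := dom S SA jS; rewrite iS.
Qed.
End H.
Arguments mem_Aset {T A i x}.
Arguments notin_Aset {T A}.
Arguments notAset_dom {T A l k}.
Arguments sep_Aset {T A i j}.

Theorem lemma1 (m : nat) (A : {set {set 'I_m.+1}}) :
  (2 <= m)%N ->
  union_closed A ->
  separating A ->
  universe A = [set i : 'I_m.+1 | (0 < i)%N] ->
  (forall i j : 'I_m.+1, (0 < i)%N -> (i <= j)%N -> (deg A i <= deg A j)%N) ->
  forall i : 'I_m.+1, (0 < i < m)%N -> (deg (Scoll A) i < m - 1)%N ->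
  exists k : 'I_m.+1,
    [/\ (0 < k < m)%N, deg (Scoll A) k = (m - 1)%N & dominates A k i].
Proof.
move=> m2 uc sep UA sorted i iI _.
pose P := fun k : 'I_m.+1 => (0 < k < m) && [forall S in A, (i \in S) ==> (k \in S)].
have Pi : P i by rewrite /P iI; apply/forall_inP => S _; apply/implyP.
case: (@arg_maxnP _ i P (fun k => nat_of_ord k) Pi) => k /andP[kI /forall_inP kdom] kmax.
have kdom' : dominates A k i by move=> S SA iS; exact: (implyP (kdom S SA)).
exists k; split => //.
have inU (x : 'I_m.+1) : (0 < x)%N -> x \in universe A by rewrite UA inE.
have lt_in (l j : 'I_m.+1) : (0 < l)%N -> (l < j)%N -> j \in Aset A l.
  move=> l0 lj; apply: sep_Aset => //; try exact: inU.
    by apply: inU; apply: leq_ltn_trans lj.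
    by rewrite neq_ltn lj.
  by apply: sorted => //; apply: ltnW.
have inj : {in [pred l : 'I_m.+1 | (0 < l < m)%N] &, injective (Aset A)}.
  move=> l1 l2 /andP[l10 _] /andP[l20 _] E.
  case: (ltngtP l1 l2) => [lt|lt|]; last by move/val_inj.
    by have := lt_in _ _ l10 lt; rewrite E (negbTE (notin_Aset _)).
  by have := lt_in _ _ l20 lt; rewrite -E (negbTE (notin_Aset _)).
have cardI : #|[pred l : 'I_m.+1 | (0 < l < m)%N]| = (m - 1)%N.
  have -> : #|[pred l : 'I_m.+1 | (0 < l < m)%N]| = #|[set: 'I_m.+1] :\ ord0 :\ ord_max|.
    apply: eq_card => l; rewrite !inE /= -val_eqE /= -val_eqE /= andbT.
    by rewrite lt0n ltn_neqAle -ltnS ltn_ord andbT andbC.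
  have h3 : (ord_max \in [set: 'I_m.+1] :\ ord0) = true.
    by rewrite !inE -val_eqE /= -lt0n ltnW.
  have e1 : #|[set: 'I_m.+1] :\ ord0| = m.
    move: (cardsD1 (ord0 : 'I_m.+1) [set: 'I_m.+1]).
    by rewrite inE cardsT card_ord add1n => -[e]; exact: esym e.
  have e2 : #|[set: 'I_m.+1] :\ ord0| = 1 + #|[set: 'I_m.+1] :\ ord0 :\ ord_max|.
    by rewrite {1}(cardsD1 ord_max) h3.
  lia.
have Un : universe A \notin [set Aset A l | l : 'I_m.+1 in [pred l : 'I_m.+1 | (0 < l < m)%N]].
  apply/imsetP => -[l /andP[l0 _] E].
  by have := inU _ l0; rewrite E (negbTE (notin_Aset _)).
have cardS : #|Scoll A| = m.
  rewrite /Scoll cardsU1 Un card_in_imset // cardI add1n subn1.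
  lia.
have AkS : Aset A k \in Scoll A by rewrite /Scoll !inE; apply/orP; right; apply: imset_f.
rewrite /deg.
have -> : [set S in Scoll A | k \in S] = Scoll A :\ Aset A k.
  apply/setP => S; rewrite in_setD1 in_set.
  case SS: (S \in Scoll A); rewrite ?andbF ?andbT //.
  case: (S =P Aset A k) => [->|ne] /=; first by rewrite (negbTE (notin_Aset _)).
  move: SS; rewrite /Scoll !inE => /orP[/eqP->|/imsetP[l /andP[l0 lm] E]].
    by apply: inU; case/andP: kI.
  subst S.
  case: (ltngtP l k) => [lt|lt|/val_inj E]; last by case: ne; rewrite E.
    exact: lt_in.
  apply/negPn/negP => kn.
  have Pl : P l.
    rewrite /P l0 lm; apply/forall_inP => S SA; apply/implyP => iS.
    exact: (notAset_dom kn) (kdom' S SA iS).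
  by have /= := kmax l Pl; rewrite leqNgt lt.
have e : m = 1 + #|Scoll A :\ Aset A k| by rewrite -{1}cardS (cardsD1 (Aset A k)) AkS.
lia.
Qed.
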